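(* Consider a discounted MDP with finite state space $\mathcal{S}$, finite action space $\mathcal{A}$, reward vector $r$, transition matrix $P$ with $P_{sa,\tilde s}=\Pr(\tilde s\mid s,a)$, initial state distribution $\mu_0$ with full support, and discount $\gamma\in[0,1)$. Let $\theta\mapsto\pi_\theta$ be a differentiable parametrized policy with $\pi_\theta(s,a)>0$ for all $(s,a)$, and let the critic be directly parametrized by a vector $q\in\mathbb{R}^{|\mathcal{S}||\mathcal{A}|}$. Define the actor objective $J_\pi(\theta,q)=(1-\gamma)\mu_0^\top\Pi_\theta q$ and the on-policy critic objective $J_q(\theta,q)=\tfrac12(r-\Psi_\theta q)^\top D_\theta(r-\Psi_\theta q)$, where $\Psi_\theta=I-\gamma P\Pi_\theta$ and $D_\theta=\Delta(d_\theta)$. Define the Stackelberg gradient $$g_{S,\theta}=\partial_\theta J_\pi-(\partial_\theta\partial_q J_q)^\top(\partial_q^2 J_q)^{-1}(\partial_q J_\pi).$$ Then for every $q$, $$g_{S,\theta}=\partial_\theta J_\pi+\nabla_\theta\big(d_\theta^\top\delta_\theta\big)=\nabla_\theta J(\theta),$$ where $\delta_\theta=r-\Psi_\theta q$ (with $q$ held fixed) and $J(\theta)=(1-\gamma)\mu_0^\top\Pi_\theta q_\theta$ is the cumulative discounted reward objective.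
   Context: $\pi_\theta\in\mathbb{R}_+^{|\mathcal{S}||\mathcal{A}|}$ has entries $\pi_\theta(s,a)$, normalized in each state. $\Pi_\theta\in\mathbb{R}^{|\mathcal{S}|\times|\mathcal{S}||\mathcal{A}|}$ is block-diagonal with row $s$ containing $\pi_\theta(s,\cdot)^\top$, so $(\Pi_\theta v)(s)=\sum_a\pi_\theta(s,a)v(s,a)$. $q_\theta=\sum_{i\ge0}(\gamma P\Pi_\theta)^i r$. $d_\theta(s,a)=(1-\gamma)\sum_{i\ge0}\gamma^i\Pr(S_i=s,A_i=a)$ is the discounted state-action visitation distribution under $S_0\sim\mu_0$, policy $\pi_\theta$ and transitions $P$; $\Delta(v)$ is the diagonal matrix with diagonal $v$. Note $J_q$ depends on $\theta$ also through $D_\theta$. $\partial_q J_\pi$ and $\partial_q^2J_q$ are the gradient and Hessian in $q$; $\partial_\theta\partial_q J_q$ is the $|\mathcal{S}||\mathcal{A}|\times p$ matrix with entries $\partial^2 J_q/\partial q_{sa}\partial\theta_i$; $\partial_\theta J_\pi$ is the $\theta$-gradient at fixed $q$. *)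

(* Defs.v *)
From HB Require Import structures.
From mathcomp Require Import all_boot all_order all_algebra.
From mathcomp Require Import all_classical all_reals all_analysis.
Set Implicit Arguments. Unset Strict Implicit. Unset Printing Implicit Defensive.
Import Order.TTheory GRing.Theory Num.Theory.
Import numFieldNormedType.Exports.
Local Open Scope ring_scope.

(* Vectors in R^{|S||A|} are functions  S * A -> R. *)

Section MDP.
Context {R : realType} {S A : finType} {p : nat}.
Variables (P : S * A -> S -> R) (mu0 : S -> R) (r : S * A -> R) (gamma : R)
          (pi : 'rV[R]_p -> S -> A -> R).

(* entry (sa, s'a') of the matrix P Pi_theta *)
Definition PPi (th : 'rV[R]_p) (x y : S * A) : R := P x y.1 * pi th y.1 y.2.

Definition PPi_mul (th : 'rV[R]_p) (v : S * A -> R) : S * A -> R :=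
  fun x => \sum_(y : S * A) PPi th x y * v y.

Definition PPi_step (th : 'rV[R]_p) (nu : S * A -> R) : S * A -> R :=
  fun y => \sum_(x : S * A) nu x * PPi th x y.

(* Pr(S_i = s, A_i = a) under S_0 ~ mu0, policy pi_theta, transitions P *)
Definition prob_sa (th : 'rV[R]_p) (i : nat) : S * A -> R :=
  iter i (PPi_step th) (fun x => mu0 x.1 * pi th x.1 x.2).

Definition dvis (th : 'rV[R]_p) (x : S * A) : R :=
  (1 - gamma) * limn (fun n : nat => \sum_(0 <= i < n) (gamma ^+ i * prob_sa th i x)).

Definition qpol (th : 'rV[R]_p) (x : S * A) : R :=
  limn (fun n : nat => \sum_(0 <= i < n) (gamma ^+ i * iter i (PPi_mul th) r x)).

Definition Pi_mul (th : 'rV[R]_p) (v : S * A -> R) (s : S) : R :=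
  \sum_(a : A) pi th s a * v (s, a).

Definition Jpi (th : 'rV[R]_p) (q : S * A -> R) : R :=
  (1 - gamma) * \sum_(s : S) mu0 s * Pi_mul th q s.

Definition Jobj (th : 'rV[R]_p) : R := Jpi th (qpol th).

Definition Psi_mul (th : 'rV[R]_p) (q : S * A -> R) (x : S * A) : R :=
  q x - gamma * PPi_mul th q x.

Definition tdelta (th : 'rV[R]_p) (q : S * A -> R) (x : S * A) : R :=
  r x - Psi_mul th q x.

Definition Jq (th : 'rV[R]_p) (q : S * A -> R) : R :=
  2^-1 * \sum_(x : S * A) dvis th x * (tdelta th q x) ^+ 2.

End MDP.

Definition qupd {R : realType} {X : eqType} (q : X -> R) (x : X) (t : R) : X -> R :=
  fun y => q y + (if y == x then t else 0).

Definition dq {R : realType} {X : eqType} (f : (X -> R) -> R) (q : X -> R) (x : X) : R :=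
  derive1 (fun t : R => f (qupd q x t)) 0.

Definition dth {R : realType} {p : nat} (f : 'rV[R]_p -> R) (th : 'rV[R]_p) (i : 'I_p) : R :=
  derive f th (delta_mx 0 i).

Definition finv {R : realType} {X : finType} (H : X -> X -> R) (x y : X) : R :=
  invmx (\matrix_(i < #|X|, j < #|X|) H (enum_val i) (enum_val j))
        (enum_rank x) (enum_rank y).

Section Stackelberg.
Context {R : realType} {S A : finType} {p : nat}.
Variables (P : S * A -> S -> R) (mu0 : S -> R) (r : S * A -> R) (gamma : R)
          (pi : 'rV[R]_p -> S -> A -> R).

Let Jpi' := Jpi mu0 gamma pi.
Let Jq' := Jq P mu0 r gamma pi.

Definition mixedJq (th : 'rV[R]_p) (q : S * A -> R) (x : S * A) (i : 'I_p) : R :=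
  dth (fun th' => dq (Jq' th') q x) th i.

Definition hessJq (th : 'rV[R]_p) (q : S * A -> R) (x y : S * A) : R :=
  dq (fun q' => dq (Jq' th) q' x) q y.

Definition gS (th : 'rV[R]_p) (q : S * A -> R) (i : 'I_p) : R :=
  dth (fun th' => Jpi' th' q) th i
  - \sum_(x : S * A) \sum_(y : S * A)
      mixedJq th q x i * finv (hessJq th q) x y * dq (Jpi' th) q y.

End Stackelberg.

(* Main.v *)
Require Import Defs.
From HB Require Import structures.
From mathcomp Require Import all_boot all_order all_algebra.
From mathcomp Require Import all_classical all_reals all_analysis.
From mathcomp Require Import ring.
Import Order.TTheory GRing.Theory Num.Theory.
Import numFieldNormedType.Exports.
Local Open Scope classical_set_scope.
Local Open Scope ring_scope.
Set Warnings "-all".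

Section Gen.
Variable R : realType.

Lemma derive1_quad (a b c : R) : derive1 (fun t : R => a + b * t + c * t ^+ 2) 0 = b.
Proof.
rewrite derive1E derive_val.
by rewrite add0r mul1r scale0r addr0 scaler0 addr0 -[RHS]mulr1.
Qed.

Lemma derive1_lin (a b : R) : derive1 (fun t : R => a + b * t) 0 = b.
Proof.
rewrite derive1E derive_val.
by rewrite add0r mul1r -[RHS]mulr1.
Qed.

Lemma sum_enum_val (X : finType) (F : X -> R) :
  \sum_(x : X) F x = \sum_(i < #|X|) F (enum_val i).
Proof.
rewrite (reindex (@enum_val X X)) //; exists enum_rank => x _.
  exact: enum_valK.
exact: enum_rankK.
Qed.

Lemma sum_delta (X : finType) (z : X) (F : X -> R) :
  \sum_(x : X) (z == x)%:R * F x = F z.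
Proof.
rewrite (bigD1 z) //= eqxx mul1r big1 ?addr0 // => x /negbTE Hx.
by rewrite eq_sym Hx mul0r.
Qed.

Lemma cvg_sumS (I : Type) (s : seq I) (f : I -> nat -> R) (l : I -> R) :
  (forall i, f i n @[n --> \oo] --> l i) ->
  \sum_(i <- s) f i n @[n --> \oo] --> \sum_(i <- s) l i.
Proof.
move=> H; elim: s => [|i s IH].
  rewrite big_nil; under eq_cvg do rewrite big_nil; exact: cvg_cst.
rewrite big_cons; under eq_cvg do rewrite big_cons.
exact: cvgD.
Qed.

Lemma unit_of_inj (T : finType) (B : T -> T -> R) :
  (forall u : T -> R, (forall z, \sum_x B z x * u x = 0) -> forall x, u x = 0) ->
  (\matrix_(i < #|T|, j < #|T|) B (enum_val i) (enum_val j)) \in unitmx.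
Proof.
move=> H; rewrite -unitmx_tr -row_free_unit -kermx_eq0; apply/eqP/row_matrixP => k.
rewrite row0; set K := kermx _; set v := row k K.
have Hv : v *m (\matrix_(i < #|T|, j < #|T|) B (enum_val i) (enum_val j))^T = 0.
  by rewrite /v -row_mul mulmx_ker row0.
apply/rowP => i; rewrite [X in _ = X]mxE.
suff Hu : forall x, v 0 (enum_rank x) = 0.
  by have := Hu (enum_val i); rewrite enum_valK.
apply: (H (fun x => v 0 (enum_rank x))) => z.
have := congr1 (fun Mx : 'rV[R]_#|T| => Mx 0 (enum_rank z)) Hv; rewrite [X in _ = X -> _]mxE.
rewrite mxE => Hz; rewrite -[RHS]Hz.
rewrite [LHS]sum_enum_val; apply: eq_bigr => j _.
by rewrite !mxE enum_rankK enum_valK mulrC.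
Qed.

Lemma fin_solve (T : finType) (Hf : T -> T -> R) (c : T -> R) (w : R) :
  (\matrix_(i < #|T|, j < #|T|) Hf (enum_val i) (enum_val j)) \in unitmx ->
  (forall x, \sum_y Hf x y * w = c x) ->
  forall x, \sum_y Defs.finv Hf x y * c y = w.
Proof.
move=> Hu Hw x; rewrite /Defs.finv.
set Hm := \matrix_(i < #|T|, j < #|T|) Hf (enum_val i) (enum_val j).
have Hc : Hm *m const_mx w = \col_j c (enum_val j).
  apply/colP => i; rewrite !mxE -(Hw (enum_val i)) [RHS]sum_enum_val.
  by apply: eq_bigr => j _; rewrite !mxE.
have := congr1 (fun Mx : 'cV[R]_#|T| => Mx (enum_rank x) 0) (mulKmx Hu (const_mx w)).
rewrite Hc [X in _ = X -> _]mxE => <-; rewrite mxE sum_enum_val.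
by apply: eq_bigr => j _; rewrite enum_valK mxE.
Qed.

Lemma cramer (T : finType) (B : T -> T -> R) (L c : T -> R) :
  (forall x, \sum_z L z * B z x = c x) ->
  forall y, \det (\matrix_(i < #|T|, j < #|T|) B (enum_val i) (enum_val j)) * L y
    = \sum_z c z * \adj (\matrix_(i < #|T|, j < #|T|) B (enum_val i) (enum_val j))
                    (enum_rank z) (enum_rank y).
Proof.
move=> HL y.
set Bm := \matrix_(i < #|T|, j < #|T|) B (enum_val i) (enum_val j).
have H1 : (\row_j L (enum_val j)) *m Bm = \row_j c (enum_val j).
  apply/rowP => j; rewrite !mxE -HL [RHS]sum_enum_val.
  by apply: eq_bigr => k _; rewrite !mxE.
have := congr1 (fun Mx : 'rV[R]_#|T| => Mx 0 (enum_rank y)) (congr1 (mulmx^~ (\adj Bm)) H1).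
rewrite /= -mulmxA mul_mx_adj mul_mx_scalar [X in X = _ -> _]mxE mxE enum_rankK => ->.
rewrite mxE [RHS]sum_enum_val; apply: eq_bigr => j _.
by rewrite enum_valK mxE.
Qed.

Variable V : normedModType R.

Lemma dM (f g : V -> R) x : differentiable f x -> differentiable g x ->
  differentiable (fun y => f y * g y) x.
Proof. exact: differentiableM. Qed.

Lemma dD (f g : V -> R) x : differentiable f x -> differentiable g x ->
  differentiable (fun y => f y + g y) x.
Proof. exact: differentiableD. Qed.

Lemma dB (f g : V -> R) x : differentiable f x -> differentiable g x ->
  differentiable (fun y => f y - g y) x.
Proof. exact: differentiableB. Qed.

Lemma dC (c : R) x : differentiable (fun _ : V => c) x.
Proof. exact: differentiable_cst. Qed.

Lemma dV (f : V -> R) x : differentiable f x -> f x != 0 ->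
  differentiable (fun y => (f y)^-1) x.
Proof. exact: differentiableV. Qed.

Lemma d_big (I : Type) (s : seq I) (P : pred I) (f : I -> V -> R) x :
  (forall i, differentiable (f i) x) ->
  differentiable (fun y => \sum_(i <- s | P i) f i y) x.
Proof.
move=> Hf; elim: s => [|i s IH].
  under [fun y => _]funext do rewrite big_nil. exact: dC.
under [fun y => _]funext do rewrite big_cons.
case: (P i) => //. exact: dD.
Qed.

Lemma d_prod (I : Type) (s : seq I) (P : pred I) (f : I -> V -> R) x :
  (forall i, differentiable (f i) x) ->
  differentiable (fun y => \prod_(i <- s | P i) f i y) x.
Proof.
move=> Hf; elim: s => [|i s IH].
  under [fun y => _]funext do rewrite big_nil. exact: dC.
under [fun y => _]funext do rewrite big_cons.
case: (P i) => //. exact: dM.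
Qed.

Lemma der_big (I : Type) (s : seq I) (P : pred I) (f : I -> V -> R) x v :
  (forall i, differentiable (f i) x) ->
  'D_v (fun y => \sum_(i <- s | P i) f i y) x = \sum_(i <- s | P i) 'D_v (f i) x.
Proof.
move=> Hf; elim: s => [|i s IH].
  under [fun y => _]funext do rewrite big_nil. by rewrite big_nil derive_cst.
under [fun y => _]funext do rewrite big_cons.
rewrite big_cons; case: (P i) => //.
rewrite (deriveD (f:=f i) (g:=fun y => \sum_(j <- s | P j) f j y)) ?IH //.
  exact: diff_derivable.
by apply: diff_derivable; apply: d_big.
Qed.

Lemma d_det n (Mf : V -> 'M[R]_n) x :
  (forall i j, differentiable (fun y => Mf y i j) x) ->
  differentiable (fun y => \det (Mf y)) x.
Proof.
move=> H; rewrite /determinant.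
apply: d_big => s; apply: dM; first exact: dC.
by apply: d_prod => i; apply: H.
Qed.

Lemma d_adj n (Mf : V -> 'M[R]_n) x :
  (forall i j, differentiable (fun y => Mf y i j) x) ->
  forall i j, differentiable (fun y => \adj (Mf y) i j) x.
Proof.
move=> H i j.
under [fun y => _]funext do rewrite mxE /cofactor.
apply: dM; first exact: dC.
apply: d_det => k l.
under [fun y => _]funext do rewrite !mxE.
exact: H.
Qed.

Lemma dN (f : V -> R) x : differentiable f x -> differentiable (fun y => - f y) x.
Proof. exact: differentiableN. Qed.

Lemma der_scale (f : V -> R) (k : R) x v : differentiable f x ->
  'D_v (fun y => k * f y) x = k * 'D_v f x.
Proof.
move=> H; have E := deriveZ k (@diff_derivable _ _ _ f x v H).
transitivity (k *: 'D_v f x); last by [].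
rewrite -E; congr (derive _ _ _); by apply/funext.
Qed.

Lemma der_add (f g : V -> R) x v : differentiable f x -> differentiable g x ->
  'D_v f x + 'D_v g x = 'D_v (fun y => f y + g y) x.
Proof. move=> Hf Hg; symmetry; exact: (deriveD (@diff_derivable _ _ _ f x v Hf) (@diff_derivable _ _ _ g x v Hg)). Qed.

End Gen.

Section MDP.
Variables (R : realType) (S A : finType) (p : nat).
Variables (P : S * A -> S -> R) (mu0 : S -> R) (r : S * A -> R) (gamma : R)
  (pi : 'rV[R]_p -> S -> A -> R).
Hypotheses (HP0 : forall x s', 0 <= P x s')
  (HP1 : forall x, \sum_(s' : S) P x s' = 1)
  (Hmu0 : forall s, 0 < mu0 s)
  (Hmu1 : \sum_(s : S) mu0 s = 1)
  (Hg0 : 0 <= gamma) (Hg1 : gamma < 1)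
  (Hpi0 : forall th s a, 0 < pi th s a)
  (Hpi1 : forall th s, \sum_(a : A) pi th s a = 1)
  (Hpid : forall s a th, differentiable (fun th' => pi th' s a) th).

Local Notation X := (S * A)%type.
Local Notation M := (PPi P pi).
Definition Ps th (z x : X) : R := (z == x)%:R - gamma * M th z x.
Definition nu0 th (x : X) : R := mu0 x.1 * pi th x.1 x.2.

Lemma sumX (F : X -> R) : \sum_(x : X) F x = \sum_(s : S) \sum_(a : A) F (s, a).
Proof. by rewrite pair_big /=; apply: eq_bigr => -[]. Qed.

Lemma M_ge0 th x y : 0 <= M th x y.
Proof. by rewrite /PPi mulr_ge0 // ltW. Qed.

Lemma M_row th x : \sum_y M th x y = 1.
Proof.
rewrite sumX -(HP1 x); apply: eq_bigr => s _.
by rewrite /PPi /= -mulr_sumr Hpi1 mulr1.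
Qed.

Lemma Ps_row th z : \sum_x Ps th z x = 1 - gamma.
Proof.
rewrite /Ps sumrB -mulr_sumr M_row mulr1; congr (_ - _).
rewrite (bigD1 z) //= eqxx big1 ?addr0 // => x /negbTE Hx.
by rewrite eq_sym Hx.
Qed.

Lemma Psi_mulE th q z : Psi_mul P gamma pi th q z = \sum_x Ps th z x * q x.
Proof.
rewrite /Psi_mul /PPi_mul /Ps.
symmetry; under eq_bigr do rewrite mulrBl.
rewrite sumrB sum_delta mulr_sumr; congr (_ - _).
by apply: eq_bigr => x _; rewrite mulrA.
Qed.

Lemma nu0_sum th : \sum_x nu0 th x = 1.
Proof.
rewrite sumX -Hmu1; apply: eq_bigr => s _.
by rewrite /nu0 /= -mulr_sumr Hpi1 mulr1.
Qed.

Lemma prob_ge0 th i x : 0 <= prob_sa P mu0 pi th i x.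
Proof.
elim: i x => [|i IH] x /=.
  by rewrite mulr_ge0 // ltW.
rewrite /PPi_step; apply: sumr_ge0 => y _; exact: mulr_ge0 (IH y) (M_ge0 _ _ _).
Qed.

Lemma prob_sum th i : \sum_x prob_sa P mu0 pi th i x = 1.
Proof.
elim: i => [|i IH] /=.
  exact: nu0_sum.
rewrite /PPi_step exchange_big /= -IH; apply: eq_bigr => y _.
by rewrite -mulr_sumr M_row mulr1.
Qed.

Lemma prob_le1 th i x : prob_sa P mu0 pi th i x <= 1.
Proof.
rewrite -(prob_sum th i) (bigD1 x) //= lerDl.
by apply: sumr_ge0 => y _; exact: prob_ge0.
Qed.

Definition Dseq th x n := \sum_(0 <= i < n) gamma ^+ i * prob_sa P mu0 pi th i x.
Definition Lsum th x := limn (Dseq th x).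

Lemma D_cvg th x : cvgn (Dseq th x).
Proof.
apply: (@series_le_cvg _ (fun i => gamma ^+ i * prob_sa P mu0 pi th i x) (geometric 1 gamma)).
- by move=> n; rewrite mulr_ge0 ?exprn_ge0 ?prob_ge0.
- by move=> n; rewrite /geometric /= mul1r exprn_ge0.
- move=> n; rewrite /geometric /= mul1r -[leRHS]mulr1.
  by rewrite ler_wpM2l ?exprn_ge0 ?prob_le1.
apply: is_cvg_geometric_series; by rewrite ger0_norm.
Qed.

Lemma D_rec th x n :
  Dseq th x n.+1 = nu0 th x + gamma * \sum_z Dseq th z n * M th z x.
Proof.
rewrite /Dseq big_nat_recl //= expr0 mul1r; congr (_ + _).
rewrite mulr_sumr; under [RHS]eq_bigr do rewrite mulr_suml mulr_sumr.
rewrite exchange_big /=; apply: eq_bigr => i _.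
rewrite /PPi_step mulr_sumr; apply: eq_bigr => z _.
rewrite exprS; ring.
Qed.

Lemma L_rec th x : Lsum th x = nu0 th x + gamma * \sum_z Lsum th z * M th z x.
Proof.
have H : Dseq th x n.+1 @[n --> \oo] --> nu0 th x + gamma * \sum_z Lsum th z * M th z x.
  under eq_cvg do rewrite D_rec.
  apply: cvgD; first exact: cvg_cst.
  apply: cvgMl_tmp; apply: cvg_sumS => z.
  apply: cvgMr_tmp; exact: D_cvg.
move: H; rewrite (cvg_shiftS (fun n => Dseq th x n)) => H.
by rewrite /Lsum (cvg_lim _ H).
Qed.

Lemma L_ge th x : nu0 th x <= Lsum th x.
Proof.
have -> : nu0 th x = Dseq th x 1 by rewrite /Dseq big_nat1 expr0 mul1r.
apply: nondecreasing_cvgn_le; last exact: D_cvg.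
move=> m n mn; rewrite /Dseq [X in _ <= X](big_cat_nat (n:=m)) //= lerDl.
apply: sumr_ge0 => i _; by rewrite mulr_ge0 ?exprn_ge0 ?prob_ge0.
Qed.

Lemma dvis_gt0 th x : 0 < dvis P mu0 gamma pi th x.
Proof.
rewrite /dvis -/(Lsum th x) mulr_gt0 ?subr_gt0 //.
apply: lt_le_trans (L_ge th x); by rewrite mulr_gt0.
Qed.

Lemma dPsi th x : \sum_z dvis P mu0 gamma pi th z * Ps th z x = (1 - gamma) * nu0 th x.
Proof.
rewrite /dvis; under eq_bigr do rewrite -/(Lsum th _) -mulrA.
rewrite -mulr_sumr; congr (_ * _).
under eq_bigr do rewrite /Ps mulrBr.
rewrite sumrB.
have -> : \sum_i Lsum th i * (i == x)%:R = Lsum th x.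
  rewrite (bigD1 x) //= eqxx mulr1 big1 ?addr0 // => z /negbTE Hz; by rewrite Hz mulr0.
rewrite {1}(L_rec th x) mulr_sumr.
rewrite [X in _ - X](eq_bigr (fun i => gamma * (Lsum th i * M th i x))); last by move=> i _; ring.
by rewrite addrK.
Qed.

Definition Qseq th x n := \sum_(0 <= i < n) gamma ^+ i * iter i (PPi_mul P pi th) r x.

Lemma iter_bound th i x : `|iter i (PPi_mul P pi th) r x| <= \sum_y `|r y|.
Proof.
elim: i x => [|i IH] x /=.
  rewrite (bigD1 x) //= lerDl; exact: sumr_ge0.
rewrite /PPi_mul; apply: le_trans (ler_norm_sum _ _ _) _.
apply: le_trans (_ : \sum_y M th x y * \sum_y `|r y| <= _).
  apply: ler_sum => y _; rewrite normrM ger0_norm ?M_ge0 //.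
  by rewrite ler_wpM2l ?M_ge0.
by rewrite -mulr_suml M_row mul1r.
Qed.

Lemma Q_cvg th x : cvgn (Qseq th x).
Proof.
apply: normed_cvg.
apply: (@series_le_cvg _ _ (geometric (\sum_y `|r y|) gamma)).
- by move=> n; exact: normr_ge0.
- by move=> n; rewrite /geometric /= mulr_ge0 ?exprn_ge0 ?sumr_ge0.
- move=> n; rewrite /geometric /= normrM ger0_norm ?exprn_ge0 // mulrC.
  by rewrite ler_wpM2r ?exprn_ge0 ?iter_bound.
apply: is_cvg_geometric_series; by rewrite ger0_norm.
Qed.

Lemma Q_rec th x n :
  Qseq th x n.+1 = r x + gamma * \sum_y M th x y * Qseq th y n.
Proof.
rewrite /Qseq big_nat_recl //= expr0 mul1r; congr (_ + _).
rewrite mulr_sumr; under [RHS]eq_bigr do rewrite mulr_sumr mulr_sumr.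
rewrite exchange_big /=; apply: eq_bigr => i _.
rewrite /PPi_mul mulr_sumr; apply: eq_bigr => z _.
rewrite exprS; ring.
Qed.

Lemma qpol_rec th x :
  qpol P r gamma pi th x = r x + gamma * \sum_y M th x y * qpol P r gamma pi th y.
Proof.
have H : Qseq th x n.+1 @[n --> \oo] --> r x + gamma * \sum_y M th x y * qpol P r gamma pi th y.
  under eq_cvg do rewrite Q_rec.
  apply: cvgD; first exact: cvg_cst.
  apply: cvgMl_tmp; apply: cvg_sumS => z.
  apply: cvgMl_tmp; exact: Q_cvg.
move: H; rewrite (cvg_shiftS (fun n => Qseq th x n)) => H.
by rewrite /qpol (cvg_lim _ H).
Qed.

Lemma Psi_qpol th x : Psi_mul P gamma pi th (qpol P r gamma pi th) x = r x.
Proof. by rewrite /Psi_mul /PPi_mul {1}qpol_rec addrK. Qed.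

Lemma Psi_inj th (u : X -> R) :
  (forall z, \sum_x Ps th z x * u x = 0) -> forall x, u x = 0.
Proof.
move=> H x0.
case: (@arg_maxP _ _ _ x0 predT (fun x => `|u x|) isT) => m _ Hm.
have E : u m = gamma * \sum_x M th m x * u x.
  move: (H m); under eq_bigr do rewrite /Ps mulrBl.
  rewrite sumrB sum_delta => /eqP; rewrite subr_eq0 => /eqP ->.
  by rewrite mulr_sumr; apply: eq_bigr => x _; rewrite mulrA.
have Hle : `|u m| <= gamma * `|u m|.
  rewrite {1}E normrM ger0_norm //; apply: ler_wpM2l => //.
  apply: le_trans (ler_norm_sum _ _ _) _.
  apply: le_trans (_ : \sum_x M th m x * `|u m| <= _).
    apply: ler_sum => x _; rewrite normrM ger0_norm ?M_ge0 // ler_wpM2l ?M_ge0 //.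
    exact: Hm.
  by rewrite -mulr_suml M_row mul1r.
have : (1 - gamma) * `|u m| <= 0 by rewrite mulrBl mul1r subr_le0.
rewrite pmulr_rle0 ?subr_gt0 // => Hm0.
apply/eqP; rewrite -normr_le0; exact: le_trans (Hm x0 isT) Hm0.
Qed.


Local Notation dv := (dvis P mu0 gamma pi).
Local Notation td := (tdelta P r gamma pi).

Lemma dq_quad (f : (X -> R) -> R) q x a b c :
  (forall t, f (qupd q x t) = a + b * t + c * t ^+ 2) -> dq f q x = b.
Proof.
move=> H; rewrite /dq.
have -> : (fun t => f (qupd q x t)) = (fun t => a + b * t + c * t ^+ 2) by apply/funext.
exact: derive1_quad.
Qed.

Lemma dq_lin (f : (X -> R) -> R) q x a b :
  (forall t, f (qupd q x t) = a + b * t) -> dq f q x = b.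
Proof.
move=> H; rewrite /dq.
have -> : (fun t => f (qupd q x t)) = (fun t => a + b * t) by apply/funext.
exact: derive1_lin.
Qed.

Lemma sum_upd (F : X -> R) q x t :
  \sum_y F y * qupd q x t y = \sum_y F y * q y + F x * t.
Proof.
rewrite /qupd; under eq_bigr do rewrite mulrDr.
rewrite big_split /=; congr (_ + _).
rewrite (bigD1 x) //= eqxx big1 ?addr0 // => y /negbTE ->; by rewrite mulr0.
Qed.

Lemma td_upd th q x t z : td th (qupd q x t) z = td th q z - t * Ps th z x.
Proof.
by rewrite /tdelta !Psi_mulE sum_upd opprD addrA mulrC.
Qed.

Lemma Jpi_nu th q : Jpi mu0 gamma pi th q = (1 - gamma) * \sum_x nu0 th x * q x.
Proof.
rewrite /Jpi /Pi_mul sumX; congr (_ * _); apply: eq_bigr => s _.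
by rewrite mulr_sumr; apply: eq_bigr => a _; rewrite /nu0 /= mulrA.
Qed.

Lemma dq_Jpi th q y : dq (Jpi mu0 gamma pi th) q y = (1 - gamma) * nu0 th y.
Proof.
apply: (dq_lin _ _ _ (Jpi mu0 gamma pi th q)) => t.
by rewrite !Jpi_nu sum_upd mulrDr mulrA.
Qed.

Lemma dq_Jq th q x :
  dq (Jq P mu0 r gamma pi th) q x = - \sum_y dv th y * td th q y * Ps th y x.
Proof.
apply: (dq_quad _ _ _ (Jq P mu0 r gamma pi th q) _
                (2^-1 * \sum_y dv th y * Ps th y x ^+ 2)) => t.
rewrite /Jq; under eq_bigr do rewrite td_upd.
rewrite -sumrN !mulr_sumr !mulr_suml -!big_split /=; apply: eq_bigr => y _.
have h2 : (2:R) != 0 by rewrite pnatr_eq0.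
by field.
Qed.

Definition Hs th (x y : X) : R := \sum_z dv th z * Ps th z y * Ps th z x.

Lemma hessE th q x y : hessJq P mu0 r gamma pi th q x y = Hs th x y.
Proof.
rewrite /hessJq.
apply: (dq_lin _ _ _ (- \sum_z dv th z * td th q z * Ps th z x)) => t.
rewrite dq_Jq; under eq_bigr do rewrite td_upd.
rewrite /Hs mulr_suml -sumrN -[in RHS]sumrN -big_split /=; apply: eq_bigr => z _; ring.
Qed.

Lemma Hs_w th x : \sum_y Hs th x y * (1 - gamma)^-1 = (1 - gamma) * nu0 th x.
Proof.
have g1 : (1 - gamma) != 0 by rewrite subr_eq0 eq_sym lt_eqF.
rewrite -dPsi /Hs; under eq_bigr do rewrite mulr_suml.
rewrite exchange_big /=; apply: eq_bigr => z _.
rewrite (eq_bigr (fun y => dv th z * Ps th z x * (1 - gamma)^-1 * Ps th z y)); last by move=> y _; ring.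
by rewrite -mulr_sumr Ps_row -mulrA mulVf // mulr1.
Qed.

Lemma Hs_unit th :
  (\matrix_(i < #|{: X}|, j < #|{: X}|) Hs th (enum_val i) (enum_val j)) \in unitmx.
Proof.
apply: unit_of_inj => u Hu.
apply: (Psi_inj th) => w.
have E : \sum_z u z * \sum_x Hs th z x * u x =
         \sum_w \sum_z \sum_x dv th w * (Ps th w z * u z) * (Ps th w x * u x).
  rewrite (eq_bigr (fun z => \sum_x \sum_w dv th w * (Ps th w z * u z) * (Ps th w x * u x))); last first.
    move=> z _; rewrite mulr_sumr; apply: eq_bigr => x _.
    rewrite /Hs mulr_suml mulr_sumr; apply: eq_bigr => w' _; ring.
  under eq_bigr do rewrite exchange_big.
  by rewrite exchange_big.
have H0 : \sum_w dv th w * (\sum_x Ps th w x * u x) ^+ 2 = 0.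
  rewrite (eq_bigr (fun w => \sum_z \sum_x dv th w * (Ps th w z * u z) * (Ps th w x * u x))); last first.
    move=> w' _; rewrite expr2 big_distrlr mulr_sumr; apply: eq_bigr => z _.
    rewrite mulr_sumr; apply: eq_bigr => x _; exact: mulrA.
  by rewrite -E big1 // => z _; rewrite Hu mulr0.
have Hnn : forall z, true -> 0 <= dv th z * (\sum_x Ps th z x * u x) ^+ 2.
  by move=> z _; rewrite mulr_ge0 ?sqr_ge0 // ltW // dvis_gt0.
have := @psumr_eq0P _ _ _ _ Hnn H0 w isT.
have Hd := dvis_gt0 th w.
by move/eqP; rewrite mulf_eq0 sqrf_eq0 gt_eqF //= => /eqP.
Qed.

Lemma Ps_diff z x th : differentiable (fun th' => Ps th' z x) th.
Proof.
rewrite /Ps /PPi; apply: dB; first exact: dC.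
apply: dM; first exact: dC.
apply: dM; first exact: dC.
exact: Hpid.
Qed.

Lemma nu0_diff x th : differentiable (fun th' => nu0 th' x) th.
Proof. apply: dM; first exact: dC. exact: Hpid. Qed.

Definition Psm th := \matrix_(i < #|{: X}|, j < #|{: X}|) Ps th (enum_val i) (enum_val j).

Lemma Psm_unit th : Psm th \in unitmx.
Proof. exact: unit_of_inj (Psi_inj th). Qed.

Lemma det_neq0 th : \det (Psm th) != 0.
Proof. by rewrite -unitfE -unitmxE Psm_unit. Qed.

Lemma dvis_formula th y : dv th y = (\det (Psm th))^-1 *
  \sum_z ((1 - gamma) * nu0 th z) * \adj (Psm th) (enum_rank z) (enum_rank y).
Proof.
have := @cramer _ _ (Ps th) (dv th) (fun x => (1 - gamma) * nu0 th x) (dPsi th) y.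
rewrite -/(Psm th) => <-.
by rewrite mulrA mulVf ?mul1r // det_neq0.
Qed.

Lemma Psm_diff i j th : differentiable (fun th' => Psm th' i j) th.
Proof. under [fun th' => _]funext do rewrite mxE. exact: Ps_diff. Qed.

Lemma dvis_diff y th : differentiable (fun th' => dv th' y) th.
Proof.
under [fun th' => _]funext do rewrite dvis_formula.
apply: dM.
  apply: dV; last exact: det_neq0.
  apply: d_det => i j; exact: (Psm_diff i j th).
apply: d_big => z; apply: dM.
  apply: dM; first exact: dC. exact: nu0_diff.
by apply: d_adj => i j; exact: (Psm_diff i j th).
Qed.

Lemma td_diff q z th : differentiable (fun th' => td th' q z) th.
Proof.
rewrite /tdelta; under [fun th' => _]funext do rewrite Psi_mulE.
apply: dB; first exact: dC.
apply: d_big => x; apply: dM; first exact: Ps_diff. exact: dC.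
Qed.

Lemma F_diff q th : differentiable (fun th' => \sum_x dv th' x * td th' q x) th.
Proof. apply: d_big => x; apply: dM; [exact: dvis_diff | exact: td_diff]. Qed.

Lemma Jpi_diff q th : differentiable (fun th' => Jpi mu0 gamma pi th' q) th.
Proof.
under [fun th' => _]funext do rewrite Jpi_nu.
apply: dM; first exact: dC.
apply: d_big => x; apply: dM; [exact: nu0_diff | exact: dC].
Qed.

Lemma g_diff q x th :
  differentiable (fun th' => - \sum_y dv th' y * td th' q y * Ps th' y x) th.
Proof.
apply: dN; apply: d_big => y; apply: dM; last exact: Ps_diff.
apply: dM; [exact: dvis_diff | exact: td_diff].
Qed.

Lemma Jpi_d th q : Jpi mu0 gamma pi th q = \sum_z dv th z * Psi_mul P gamma pi th q z.
Proof.
rewrite Jpi_nu; under [RHS]eq_bigr do rewrite Psi_mulE mulr_sumr.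
rewrite exchange_big /= mulr_sumr; apply: eq_bigr => x _.
rewrite mulrA -dPsi mulr_suml; apply: eq_bigr => z _; ring.
Qed.

Lemma J_ident th q : Jpi mu0 gamma pi th q + \sum_x dv th x * td th q x =
  Jobj P mu0 r gamma pi th.
Proof.
rewrite /Jobj !Jpi_d -big_split /=; apply: eq_bigr => z _.
by rewrite Psi_qpol /tdelta; ring.
Qed.

Lemma gsum q th' :
  \sum_x (- \sum_y dv th' y * td th' q y * Ps th' y x) =
  - (1 - gamma) * \sum_y dv th' y * td th' q y.
Proof.
rewrite sumrN exchange_big /= mulNr mulr_sumr; congr (- _); apply: eq_bigr => y _.
by rewrite -mulr_sumr Ps_row mulrC.
Qed.

Lemma main_sec th q i :
    gS P mu0 r gamma pi th q i
      = dth (fun th' => Jpi mu0 gamma pi th' q) th i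
        + dth (fun th' => \sum_(x : S * A)
                   dvis P mu0 gamma pi th' x * tdelta P r gamma pi th' q x) th i
    /\ dth (fun th' => Jpi mu0 gamma pi th' q) th i
        + dth (fun th' => \sum_(x : S * A)
                   dvis P mu0 gamma pi th' x * tdelta P r gamma pi th' q x) th i
       = dth (Jobj P mu0 r gamma pi) th i.
Proof.
have g1 : (1 - gamma) != 0 by rewrite subr_eq0 eq_sym lt_eqF.
set w := (1 - gamma)^-1.
have Hfin : forall x, \sum_y Defs.finv (hessJq P mu0 r gamma pi th q) x y
                     * dq (Jpi mu0 gamma pi th) q y = w.
  move=> x; under eq_bigr do rewrite dq_Jpi.
  have -> : hessJq P mu0 r gamma pi th q = Hs th.
    by apply/funext => a; apply/funext => b; exact: hessE.
  apply: (@fin_solve _ _ (Hs th) (fun y => (1 - gamma) * nu0 th y)).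
    exact: Hs_unit.
  exact: Hs_w.
have Hmix : forall x, mixedJq P mu0 r gamma pi th q x i =
    dth (fun th' => - \sum_y dv th' y * td th' q y * Ps th' y x) th i.
  move=> x; rewrite /mixedJq; congr (dth _ _ _); apply/funext => th'; exact: dq_Jq.
have HS : \sum_x mixedJq P mu0 r gamma pi th q x i * w =
    - dth (fun th' => \sum_x dv th' x * td th' q x) th i.
  under eq_bigr do rewrite Hmix.
  rewrite -mulr_suml /dth -der_big; last by move=> x; exact: g_diff.
  under [fun th' => _]funext do rewrite gsum.
  rewrite der_scale; last exact: F_diff.
  by rewrite mulrAC mulNr /w mulfV // mulN1r.
split.
  rewrite /gS (eq_bigr (fun x => mixedJq P mu0 r gamma pi th q x i * w)).
    by rewrite HS opprK.
  move=> x _; rewrite -(Hfin x) mulr_sumr; apply: eq_bigr => y _; by rewrite mulrA.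
rewrite /dth der_add; [|exact: Jpi_diff|exact: F_diff].
congr (derive _ _ _); apply/funext => th'; exact: J_ident.
Qed.
End MDP.

Theorem theorem3 (R : realType) (S A : finType) (p : nat)
  (P : S * A -> S -> R) (mu0 : S -> R) (r : S * A -> R) (gamma : R)
  (pi : 'rV[R]_p -> S -> A -> R)
  (HP0 : forall x s', 0 <= P x s')
  (HP1 : forall x, \sum_(s' : S) P x s' = 1)
  (Hmu0 : forall s, 0 < mu0 s)
  (Hmu1 : \sum_(s : S) mu0 s = 1)
  (Hg0 : 0 <= gamma) (Hg1 : gamma < 1)
  (Hpi0 : forall th s a, 0 < pi th s a)
  (Hpi1 : forall th s, \sum_(a : A) pi th s a = 1)
  (Hpid : forall s a th, differentiable (fun th' => pi th' s a) th) :
  forall (th : 'rV[R]_p) (q : S * A -> R) (i : 'I_p),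
    gS P mu0 r gamma pi th q i
      = dth (fun th' => Jpi mu0 gamma pi th' q) th i
        + dth (fun th' => \sum_(x : S * A)
                   dvis P mu0 gamma pi th' x * tdelta P r gamma pi th' q x) th i
    /\ dth (fun th' => Jpi mu0 gamma pi th' q) th i
        + dth (fun th' => \sum_(x : S * A)
                   dvis P mu0 gamma pi th' x * tdelta P r gamma pi th' q x) th i
       = dth (Jobj P mu0 r gamma pi) th i.
Proof.
move=> th q i.
exact: (@main_sec R S A p P mu0 r gamma pi HP0 HP1 Hmu0 Hmu1 Hg0 Hg1 Hpi0 Hpi1 Hpid th q i).
Qed.
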